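(* Let $x$ be a $\Pi$-module with $\tau$-datum $(M,\theta)$. Suppose that as a $Q$-representation $M=M_1\oplus M_2$ and $\operatorname{Hom}_Q(M_2,\tau M_1)=0$. For $i=1,2$ let $\iota_i:M_i\hookrightarrow M$ and $p_i:M\twoheadrightarrow M_i$ be the canonical maps and let $x_i$ be the $\Pi$-module with $\tau$-datum $(M_i,\theta_i)$, $\theta_i=\tau(p_i)\theta\iota_i\in\operatorname{Hom}_Q(M_i,\tau M_i)$. Then $x$ is an extension of $x_1$ by $x_2$ (there is a short exact sequence $0\to x_2\to x\to x_1\to0$). Suppose moreover that $\operatorname{Hom}_Q(M_2,M_1)=0$ and $x$ is rigid. Then $x_1$ and $x_2$ are rigid. If in addition $\operatorname{End}_Q(M_2)=K$, then $\operatorname{Ext}^1_\Pi(x,x_1)=0$.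
   Context: $K$ is an algebraically closed field, $Q=(I,\Omega)$ a finite quiver without oriented cycles and without loops, and $\Pi$ its preprojective algebra ($K\overline Q$ modulo the ideal generated by $\sum_{h\in\Omega}(hh^{op}-h^{op}h)$). $\tau$ is the Auslander–Reiten translation on finite-dimensional $KQ$-modules (equivalently $\epsilon\Phi^+$, with $\Phi^+$ the BGP Coxeter functor and $\epsilon$ the twist by the automorphism multiplying each arrow by $-1$). By Ringel, finite-dimensional $\Pi$-modules are equivalent to pairs $(M,\theta)$ ($\tau$-data) with $M$ a $KQ$-module (the restriction of the $\Pi$-module to $KQ$) and $\theta\in\operatorname{Hom}_Q(M,\tau M)$, morphisms being $f\in\operatorname{Hom}_Q(M,N)$ with $\theta'f=\tau(f)\theta$. A $\Pi$-module $y$ is rigid if $\operatorname{Ext}^1_\Pi(y,y)=0$. *)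

(* Defs.v *)
From HB Require Import structures.
From mathcomp Require Import all_boot all_order all_algebra.
Set Implicit Arguments. Unset Strict Implicit. Unset Printing Implicit Defensive.
Import GRing.Theory.
Local Open Scope ring_scope.

Record quiver := Quiver {
  vert : finType;
  arrow : finType;
  src : arrow -> vert;
  tgt : arrow -> vert }.

Definition acyclic (Q : quiver) : Prop :=
  forall (h0 : arrow Q) (s : seq (arrow Q)),
    ~ (path (fun a b => tgt a == src b) h0 s /\ tgt (last h0 s) = src h0).

Section Reps.
Variables (K : fieldType) (Q : quiver).

(* Finite-dimensional representations of Q: V_i = K^(rdim i) (row vectors),
   linear maps act on the right, so a map V_a -> V_b is a 'M_(dim a, dim b)
   and "f then g" is  f *m g. *)
Record rep := Rep {
  rdim : vert Q -> nat;
  rarr : forall h : arrow Q, 'M[K]_(rdim (src h), rdim (tgt h)) }.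

Definition vcast (m n : vert Q -> nat) (a i : vert Q) (A : 'M[K]_(m a, n a))
  : 'M[K]_(m i, n i) :=
  match a =P i with
  | ReflectT e => castmx (congr1 m e, congr1 n e) A
  | ReflectF _ => 0
  end.

Definition vmaps (M N : rep) := forall i : vert Q, 'M[K]_(rdim M i, rdim N i).

Definition is_qmor (M N : rep) (f : vmaps M N) : Prop :=
  forall h : arrow Q, rarr M h *m f (tgt h) = f (src h) *m rarr N h.

(* Hom_Q(M, tau N), in Ringel's model: families c_h : M_(tgt h) -> N_(src h)
   killed by the map to (+)_i Hom(M_i, N_i) (this is D Ext^1_Q(N, M), which is
   naturally isomorphic to Hom_Q(M, tau N) by the Auslander-Reiten formula). *)
Definition tauhom (M N : rep) :=
  forall h : arrow Q, 'M[K]_(rdim M (tgt h), rdim N (src h)).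

Definition in_tauhom (M N : rep) (c : tauhom M N) : Prop :=
  forall i : vert Q,
    \sum_(h : arrow Q) @vcast (rdim M) (rdim N) (src h) i (rarr M h *m c h)
  - \sum_(h : arrow Q) @vcast (rdim M) (rdim N) (tgt h) i (c h *m rarr N h) = 0.

(* action of Q-morphisms on Hom_Q(-, tau -): for g : M' -> M and f : N -> N',
   tau(f) o c o g. *)
Definition tau_comp (M' M N N' : rep) (g : vmaps M' M) (c : tauhom M N)
  (f : vmaps N N') : tauhom M' N' :=
  fun h => g (tgt h) *m c h *m f (src h).

(* Pi-modules as tau-data (M, theta), theta in Hom_Q(M, tau M); for
   M = M the condition in_tauhom is exactly the preprojective relation. *)
Record pimod := PiMod {
  pM : rep;
  ptheta : tauhom pM pM;
  ptheta_ok : in_tauhom ptheta }.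

Definition is_pimor (x y : pimod) (f : vmaps (pM x) (pM y)) : Prop :=
  is_qmor f /\
  forall h : arrow Q, f (tgt h) *m ptheta y h = ptheta x h *m f (src h).

Definition is_ses (z e y : pimod) (i : vmaps (pM z) (pM e))
  (p : vmaps (pM e) (pM y)) : Prop :=
  [/\ is_pimor i, is_pimor p &
      forall v : vert Q, [/\ row_free (i v), row_full (p v)
                          & (i v == kermx (p v))%MS]].

Definition is_extension (y z x : pimod) : Prop :=
  exists i p, @is_ses z x y i p.

(* Ext^1_Pi(y, z) = 0 (Yoneda): every s.e.s. 0 -> z -> e -> y -> 0 splits *)
Definition ext1_zero (y z : pimod) : Prop :=
  forall (e : pimod) i p, @is_ses z e y i p ->
    exists s : vmaps (pM y) (pM e),
      is_pimor s /\ forall v : vert Q, s v *m p v = 1%:M.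

Definition rigid (y : pimod) : Prop := ext1_zero y y.

Definition qhom_zero (M N : rep) : Prop :=
  forall f : vmaps M N, is_qmor f -> forall i, f i = 0.

Definition tauhom_zero (M N : rep) : Prop :=
  forall c : tauhom M N, in_tauhom c -> forall h, c h = 0.

Definition end_is_field (M : rep) : Prop :=
  (exists i, rdim M i != 0%N) /\
  forall f : vmaps M M, is_qmor f -> exists a : K, forall i, f i = a%:M.

Definition is_biproduct (M1 M2 M : rep) (i1 : vmaps M1 M) (i2 : vmaps M2 M)
  (p1 : vmaps M M1) (p2 : vmaps M M2) : Prop :=
  [/\ is_qmor i1, is_qmor i2, is_qmor p1, is_qmor p2 &
    forall v : vert Q,
      [/\ i1 v *m p1 v = 1%:M, i2 v *m p2 v = 1%:M, i1 v *m p2 v = 0,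
          i2 v *m p1 v = 0 & p1 v *m i1 v + p2 v *m i2 v = 1%:M]].

End Reps.

(* Main.v *)
Require Import Defs.
From HB Require Import structures.
From mathcomp Require Import all_boot all_order all_algebra zify ring.
Set Implicit Arguments. Unset Strict Implicit. Unset Printing Implicit Defensive.
Import GRing.Theory.
Local Open Scope ring_scope.

Section Aux.
Variables (K : fieldType) (Q : quiver).
Implicit Types (m n k : vert Q -> nat).

Lemma vcast_id m n a (A : 'M[K]_(m a, n a)) : vcast a A = A.
Proof.
rewrite /vcast; case: eqP => // e.
by rewrite (eq_irrelevance e erefl) castmx_id.
Qed.

Lemma vcast_neq m n a i (A : 'M[K]_(m a, n a)) : a != i -> vcast i A = 0.
Proof. by rewrite /vcast; case: eqP. Qed.

Lemma vcastD m n a i (A B : 'M[K]_(m a, n a)) :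
  vcast i (A + B) = vcast i A + vcast i B.
Proof.
have [e|ne] := eqVneq a i; last by rewrite !vcast_neq // addr0.
by subst i; rewrite !vcast_id.
Qed.

Lemma vcastN m n a i (A : 'M[K]_(m a, n a)) : vcast i (- A) = - vcast i A.
Proof.
have [e|ne] := eqVneq a i; last by rewrite !vcast_neq // oppr0.
by subst i; rewrite !vcast_id.
Qed.

Lemma vcastB m n a i (A B : 'M[K]_(m a, n a)) :
  vcast i (A - B) = vcast i A - vcast i B.
Proof. by rewrite vcastD vcastN. Qed.

Lemma vcast0 m n a i : vcast (m:=m) (n:=n) (a:=a) i 0 = 0 :> 'M[K]_(_,_).
Proof.
have [e|ne] := eqVneq a i; last by rewrite !vcast_neq.
by subst i; rewrite !vcast_id.
Qed.

Lemma vcast_fam m k n a i (g : forall v, 'M[K]_(m v, k v)) (A : 'M[K]_(k a, n a)) :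
  vcast i (g a *m A) = g i *m vcast i A.
Proof.
have [e|ne] := eqVneq a i; last by rewrite !vcast_neq // mulmx0.
by subst i; rewrite !vcast_id.
Qed.

Lemma vcast_famr m k n a i (f : forall v, 'M[K]_(k v, n v)) (A : 'M[K]_(m a, k a)) :
  vcast i (A *m f a) = vcast i A *m f i.
Proof.
have [e|ne] := eqVneq a i; last by rewrite !vcast_neq // mul0mx.
by subst i; rewrite !vcast_id.
Qed.

Lemma sum_vcast_tr m n a (A : 'M[K]_(m a, n a)) (f : forall v, 'M[K]_(n v, m v)) :
  \sum_i \tr (vcast i A *m f i) = \tr (A *m f a).
Proof.
rewrite (bigD1 a) //= vcast_id big1 ?addr0 // => i ne.
by rewrite vcast_neq 1?eq_sym // mul0mx mxtrace0.
Qed.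

End Aux.

Section Aux2.
Variables (K : fieldType) (Q : quiver).

Lemma tau_comp_ok (M' M N N' : rep K Q) (g : vmaps M' M) (c : tauhom M N)
  (f : vmaps N N') : is_qmor g -> is_qmor f -> in_tauhom c ->
  in_tauhom (tau_comp g c f).
Proof.
move=> Hg Hf Hc i; rewrite /tau_comp.
have E1 : forall h, rarr M' h *m (g (tgt h) *m c h *m f (src h)) =
   g (src h) *m (rarr M h *m c h) *m f (src h).
  by move=> h; rewrite !mulmxA Hg.
have E2 : forall h, g (tgt h) *m c h *m f (src h) *m rarr N' h =
   g (tgt h) *m (c h *m rarr N h) *m f (tgt h).
  by move=> h; rewrite -!mulmxA -Hf.
under eq_bigr => h _ do rewrite E1 (vcast_famr _ f) (vcast_fam _ g).
under [X in _ - X]eq_bigr => h _ do rewrite E2 (vcast_famr _ f) (vcast_fam _ g).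
by rewrite -!mulmx_suml -!mulmx_sumr -mulmxBl -mulmxBr Hc mulmx0 mul0mx.
Qed.

End Aux2.

Section Blocks.
Variables (K : fieldType) (Q : quiver).
Implicit Types (m n : vert Q -> nat).

Lemma vcast_block m1 m2 n1 n2 a i (A : 'M[K]_(m1 a, n1 a)) (B : 'M[K]_(m1 a, n2 a))
  (C : 'M[K]_(m2 a, n1 a)) (D : 'M[K]_(m2 a, n2 a)) :
  vcast (m := fun v => (m1 v + m2 v)%N) (n := fun v => (n1 v + n2 v)%N) i (block_mx A B C D)
  = block_mx (vcast i A) (vcast i B) (vcast i C) (vcast i D).
Proof.
have [e|ne] := eqVneq a i; last by rewrite !vcast_neq // block_mx0.
by subst i; rewrite !vcast_id.
Qed.

Lemma sum_block (I : Type) (r : seq I) (P : pred I) (m1 m2 n1 n2 : nat)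
  (A : I -> 'M[K]_(m1, n1)) (B : I -> 'M[K]_(m1, n2))
  (C : I -> 'M[K]_(m2, n1)) (D : I -> 'M[K]_(m2, n2)) :
  \sum_(j <- r | P j) block_mx (A j) (B j) (C j) (D j) =
  block_mx (\sum_(j <- r | P j) A j) (\sum_(j <- r | P j) B j)
           (\sum_(j <- r | P j) C j) (\sum_(j <- r | P j) D j).
Proof.
elim: r => [|x r IH]; first by rewrite !big_nil block_mx0.
by rewrite !big_cons; case: (P x); rewrite ?IH ?add_block_mx.
Qed.

Lemma sub_block (m1 m2 n1 n2 : nat) (A : 'M[K]_(m1, n1)) (B : 'M[K]_(m1, n2))
  (C : 'M[K]_(m2, n1)) (D : 'M[K]_(m2, n2)) A' B' C' D' :
  block_mx A B C D - block_mx A' B' C' D' = block_mx (A - A') (B - B') (C - C') (D - D').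
Proof. by rewrite opp_block_mx add_block_mx. Qed.

End Blocks.

Lemma ker_sub_gen (F : fieldType) n m r (p : 'M[F]_(n, m)) (s : 'M_(m, n))
  (j : 'M_(n, r)) (i : 'M_(r, n)) : p *m s + j *m i = 1%:M -> (kermx p <= i)%MS.
Proof.
move=> H; rewrite -[kermx p]mulmx1 -H mulmxDr !mulmxA mulmx_ker mul0mx add0r.
exact: submxMl.
Qed.

Lemma rsub_col01 (F : fieldType) m n1 n2 (A : 'M[F]_(m, n1 + n2)) :
  rsubmx A = A *m col_mx 0 1%:M.
Proof. by rewrite -{2}[A]hsubmxK mul_row_col mulmx0 add0r mulmx1. Qed.

Lemma zmod_swap (V : zmodType) (A B C D : V) : A - B = C - D -> A - C = B - D.
Proof.
move=> H; rewrite -[A](subrK B) H.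
by rewrite addrAC [C - D]addrC addrK addrC.
Qed.

Section Coc.
Variables (K : fieldType) (Q : quiver).

Definition coc (y z : pimod K Q)
  (a : forall h, 'M[K]_(rdim (pM y) (src h), rdim (pM z) (tgt h)))
  (b : forall h, 'M[K]_(rdim (pM y) (tgt h), rdim (pM z) (src h))) : Prop :=
  forall i,
  \sum_h vcast (m := rdim (pM y)) (n := rdim (pM z)) i
      (a h *m ptheta z h + rarr (pM y) h *m b h)
  - \sum_h vcast (m := rdim (pM y)) (n := rdim (pM z)) i
      (b h *m rarr (pM z) h + ptheta y h *m a h) = 0.

Definition cob (y z : pimod K Q)
  (a : forall h, 'M[K]_(rdim (pM y) (src h), rdim (pM z) (tgt h)))
  (b : forall h, 'M[K]_(rdim (pM y) (tgt h), rdim (pM z) (src h))) : Prop :=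
  exists psi : forall v, 'M[K]_(rdim (pM y) v, rdim (pM z) v),
  forall h, a h = rarr (pM y) h *m psi (tgt h) - psi (src h) *m rarr (pM z) h
         /\ b h = ptheta y h *m psi (src h) - psi (tgt h) *m ptheta z h.

Definition H1zero (y z : pimod K Q) := forall a b, @coc y z a b -> @cob y z a b.

Section Ext.
Variables (y z : pimod K Q).
Variables (a : forall h, 'M[K]_(rdim (pM y) (src h), rdim (pM z) (tgt h)))
  (b : forall h, 'M[K]_(rdim (pM y) (tgt h), rdim (pM z) (src h))).
Hypothesis Hab : @coc y z a b.

Definition dE v := (rdim (pM z) v + rdim (pM y) v)%N.
Definition RE : rep K Q :=
  @Rep K Q dE (fun h => block_mx (rarr (pM z) h) 0 (a h) (rarr (pM y) h)).
Definition thE : tauhom RE RE :=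
  fun h => block_mx (ptheta z h) 0 (b h) (ptheta y h).

Lemma thE_ok : in_tauhom thE.
Proof.
move=> i; rewrite /thE /=.
under eq_bigr => h _ do rewrite mulmx_block !mulmx0 !mul0mx !addr0 !add0r
   (vcast_block (m1 := rdim (pM z))).
under [X in _ - X]eq_bigr => h _ do rewrite mulmx_block !mulmx0 !mul0mx !addr0 !add0r
   (vcast_block (m1 := rdim (pM z))).
rewrite !sum_block sub_block.
have Hz := @ptheta_ok K Q z i.
have Hy := @ptheta_ok K Q y i.
have Hc := Hab i.
rewrite Hz Hy Hc !big1 ?subr0 ?block_mx0 // => h _; exact: vcast0.
Qed.


Definition PE := @PiMod K Q RE thE thE_ok.
Definition iE : vmaps (pM z) (pM PE) := fun v => row_mx 1%:M 0.
Definition pE : vmaps (pM PE) (pM y) := fun v => col_mx 0 1%:M.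

Lemma ses_E : is_ses iE pE.
Proof.
split.
- split=> h; rewrite /iE /= ?mul_mx_row ?mul_row_block ?mulmx1 ?mul1mx ?mulmx0 ?mul0mx
     ?addr0 ?add0r //.
- split=> h; rewrite /pE /= ?mul_block_col ?mul_col_mx ?mulmx1 ?mul1mx ?mulmx0 ?mul0mx
     ?addr0 ?add0r //.
- move=> v; split.
  + by apply/row_freeP; exists (col_mx 1%:M 0); rewrite mul_row_col mulmx1 mulmx0 addr0.
  + by apply/row_fullP; exists (row_mx 0 1%:M); rewrite mul_row_col mulmx1 mulmx0 add0r.
  + apply/andP; split.
      by apply/sub_kermxP; rewrite /iE /pE mul_row_col mulmx0 mul0mx addr0.
    apply: (ker_sub_gen (s := row_mx 0 1%:M) (j := col_mx 1%:M 0)).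
    rewrite /pE /iE !mul_col_row !mulmx0 !mul0mx !mulmx1.
    by rewrite add_block_mx !addr0 !add0r -scalar_mx_block.
Qed.

End Ext.

Lemma ext_H1 (y z : pimod K Q) : ext1_zero y z -> H1zero y z.
Proof.
move=> H a b Hab.
have [s [[Hq Ht] Hsp]] := H _ _ _ (ses_E Hab).
pose psi := fun v => lsubmx (s v).
have Hs : forall v, s v = row_mx (psi v) 1%:M.
  move=> v; rewrite -[LHS]hsubmxK; congr row_mx.
  by rewrite -(Hsp v) /pE rsub_col01.
exists psi => h; split.
- move: (Hq h); rewrite !Hs /= mul_mx_row mul_row_block !mulmx1 mul1mx mulmx0 add0r.
  by case/eq_row_mx => -> _; rewrite addrC addKr.
- move: (Ht h); rewrite !Hs /= mul_mx_row mul_row_block !mulmx1 mul1mx mulmx0 add0r.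
  by case/eq_row_mx => <- _; rewrite addrC addKr.
Qed.

Lemma H1_ext (y z : pimod K Q) : H1zero y z -> ext1_zero y z.
Proof.
move=> H e i p [[iQ iT] [pQ pT] Hv].
have [r rp] : exists r : forall v, 'M_(rdim (pM y) v, rdim (pM e) v),
    forall v, r v *m p v = 1%:M.
  exists (fun v => pinvmx (p v)) => v; have [_ Hf _] := Hv v.
  by rewrite -[pinvmx _]mul1mx mulmxKpV // submx_full.
have ip : forall v, i v *m p v = 0.
  by move=> v; have [_ _ /andP[/sub_kermxP]] := Hv v.
have subi : forall v k (X : 'M_(k, rdim (pM e) v)), X *m p v = 0 -> X *m pinvmx (i v) *m i v = X.
  move=> v k X HX; apply: mulmxKpV; have [_ _ /andP[_ Hk]] := Hv v.
  by apply: submx_trans Hk; apply/sub_kermxP.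
pose X := fun h => rarr (pM y) h *m r (tgt h) - r (src h) *m rarr (pM e) h.
pose Y := fun h => ptheta y h *m r (src h) - r (tgt h) *m ptheta e h.
have HX : forall h, X h *m p (tgt h) = 0.
  move=> h; rewrite /X mulmxBl -!mulmxA pQ rp mulmxA rp mulmx1 mul1mx subrr //.
have HY : forall h, Y h *m p (src h) = 0.
  move=> h; rewrite /Y mulmxBl -!mulmxA -pT rp mulmxA rp mulmx1 mul1mx subrr //.
have [a Ha] : exists a : forall h, 'M_(rdim (pM y) (src h), rdim (pM z) (tgt h)),
   forall h, a h *m i (tgt h) = X h.
  by exists (fun h => X h *m pinvmx (i (tgt h))) => h; apply: subi.
have [b Hb] : exists b : forall h, 'M_(rdim (pM y) (tgt h), rdim (pM z) (src h)),
   forall h, b h *m i (src h) = Y h.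
  by exists (fun h => Y h *m pinvmx (i (src h))) => h; apply: subi.
have Hc : @coc y z a b.
  move=> v; have [Hfree _ _] := Hv v.
  apply: (row_free_inj Hfree); rewrite mul0mx mulmxBl !mulmx_suml.
  have E1 : forall h, (a h *m ptheta z h + rarr (pM y) h *m b h) *m i (src h) =
     rarr (pM y) h *m ptheta y h *m r (src h) - r (src h) *m (rarr (pM e) h *m ptheta e h).
    move=> h; rewrite mulmxDl -!mulmxA -iT Hb mulmxA Ha /X /Y.
    rewrite mulmxBl !mulmxBr !mulmxA.
    by rewrite addrC addrA subrK.
  have E2 : forall h, (b h *m rarr (pM z) h + ptheta y h *m a h) *m i (tgt h) =
     ptheta y h *m rarr (pM y) h *m r (tgt h) - r (tgt h) *m (ptheta e h *m rarr (pM e) h).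
    move=> h; rewrite mulmxDl -!mulmxA iQ Ha mulmxA Hb /X /Y.
    rewrite mulmxBl !mulmxBr !mulmxA.
    by rewrite addrC addrA subrK.
  under eq_bigr => h _ do rewrite -(vcast_famr v i) E1 vcastB (vcast_famr v r) (vcast_fam v r).
  under [X in _ - X]eq_bigr => h _ do rewrite -(vcast_famr v i) E2 vcastB (vcast_famr v r) (vcast_fam v r).
  rewrite !sumrB -!mulmx_suml -!mulmx_sumr.
  have := @ptheta_ok K Q y v; move/eqP; rewrite subr_eq0 => /eqP ->.
  have := @ptheta_ok K Q e v; move/eqP; rewrite subr_eq0 => /eqP ->.
  by rewrite subrr.
have [psi Hpsi] := H a b Hc.
exists (fun v => r v - psi v *m i v); split; first split.
- move=> h; have [Ea _] := Hpsi h.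
  have := Ha h; rewrite Ea /X mulmxBl -[psi _ *m _ *m _]mulmxA iQ !mulmxA => H1.
  rewrite mulmxBr mulmxBl !mulmxA; apply: zmod_swap; exact: esym.
- move=> h; have [_ Eb] := Hpsi h.
  have := Hb h; rewrite Eb /Y mulmxBl -[psi _ *m _ *m _]mulmxA -iT !mulmxA => H1.
  rewrite mulmxBr mulmxBl !mulmxA; apply: esym; apply: zmod_swap; exact: esym.
- by move=> v; rewrite mulmxBl rp -mulmxA ip mulmx0 subr0.
Qed.

End Coc.

Lemma ffun_addE (K : fieldType) (T : finType) (V : lmodType K) (a : K) (u w : {ffun T -> V}) x :
  (a *: u + w) x = a *: u x + w x.
Proof. by rewrite !ffunE. Qed.

Lemma tr_delta (R : comPzRingType) m n (i : 'I_m) (j : 'I_n) (M : 'M[R]_(n, m)) :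
  \tr (delta_mx i j *m M) = M j i.
Proof.
rewrite mxtrace_mulC /mxtrace (bigD1 j) //= big1 ?addr0.
  rewrite mxE (bigD1 i) //= big1 ?addr0; first by rewrite mxE !eqxx mulr1.
  by move=> k ne; rewrite mxE (negbTE ne) mulr0.
move=> k ne; rewrite mxE big1 // => l _; rewrite mxE.
by rewrite (negbTE ne) andbF mulr0.
Qed.

Section Sel.
Variables (K : fieldType) (D : nat).
Definition sel p : 'M[K]_(p, D) := \matrix_(i, j) (val i == val j)%:R.
Lemma selK p : (p <= D)%N -> sel p *m (sel p)^T = 1%:M.
Proof.
move=> H; apply/matrixP => i i'; rewrite !mxE (bigD1 (widen_ord H i)) //= big1 ?addr0.
  by rewrite !mxE eqxx mul1r eq_sym.
by move=> j ne; rewrite !mxE; case: eqP => [e|]; rewrite ?mul0r //; case/eqP: ne; apply: val_inj.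
Qed.
Definition padm p q (A : 'M[K]_(p, q)) : 'M[K]_(D, D) := (sel p)^T *m A *m sel q.
Definition unpadm p q (B : 'M[K]_(D, D)) : 'M[K]_(p, q) := sel p *m B *m (sel q)^T.
Lemma padK p q (A : 'M[K]_(p, q)) : (p <= D)%N -> (q <= D)%N -> unpadm p q (padm A) = A.
Proof.
move=> Hp Hq; rewrite /unpadm /padm !mulmxA selK // mul1mx -mulmxA selK //.
by rewrite mulmx1.
Qed.
End Sel.

Section Dual.
Variables (K : fieldType) (Q : quiver) (N L : rep K Q).

Definition Tf (c : tauhom N L) i : 'M[K]_(rdim N i, rdim L i) :=
  \sum_h vcast (m := rdim N) (n := rdim L) i (rarr N h *m c h)
  - \sum_h vcast (m := rdim N) (n := rdim L) i (c h *m rarr L h).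

Lemma Tf_ext (c1 c2 : tauhom N L) i : (forall h, c1 h = c2 h) -> Tf c1 i = Tf c2 i.
Proof. by move=> H; rewrite /Tf; under eq_bigr do rewrite H; under [X in _ - X]eq_bigr do rewrite H. Qed.

Lemma vcastZ (m n : vert Q -> nat) a i (k : K) (A : 'M[K]_(m a, n a)) :
  vcast (m := m) (n := n) i (k *: A) = k *: vcast i A.
Proof.
have [e|ne] := eqVneq a i; last by rewrite !vcast_neq // scaler0.
by subst i; rewrite !vcast_id.
Qed.

Lemma Tf_lin (k : K) (c1 c2 : tauhom N L) i :
  Tf (fun h => k *: c1 h + c2 h) i = k *: Tf c1 i + Tf c2 i.
Proof.
rewrite /Tf.
under eq_bigr do rewrite mulmxDr -scalemxAr vcastD vcastZ.
under [X in _ - X]eq_bigr do rewrite mulmxDl -scalemxAl vcastD vcastZ.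
rewrite !big_split /= -!scaler_sumr scalerBr.
by rewrite opprD addrACA.
Qed.

Lemma trB (n : nat) (X Y : 'M[K]_n) : \tr (X - Y) = \tr X - \tr Y.
Proof. exact: raddfB. Qed.
Lemma tr_sum (n : nat) (I : finType) (F : I -> 'M[K]_n) : \tr (\sum_j F j) = \sum_j \tr (F j).
Proof. exact: raddf_sum. Qed.

Lemma pair_Tf (c : tauhom N L) (phi : vmaps L N) :
  \sum_i \tr (Tf c i *m phi i) =
  \sum_h \tr (c h *m (phi (src h) *m rarr N h - rarr L h *m phi (tgt h))).
Proof.
rewrite /Tf.
under eq_bigr do rewrite mulmxBl !mulmx_suml trB !tr_sum.
rewrite sumrB exchange_big [X in _ - X]exchange_big -sumrB /=.
apply: eq_bigr => h _; rewrite !sum_vcast_tr mulmxBr trB.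
by rewrite -mulmxA mxtrace_mulC !mulmxA.
Qed.


Definition DD := (\sum_i (rdim N i + rdim L i)).+1.
Lemma leND i : (rdim N i <= DD)%N.
Proof. rewrite /DD (bigD1 i) //=; lia. Qed.
Lemma leLD i : (rdim L i <= DD)%N.
Proof. rewrite /DD (bigD1 i) //=; lia. Qed.

Notation UU := {ffun arrow Q -> 'M[K]_(DD, DD)}.
Notation VV := {ffun vert Q -> 'M[K]_(DD, DD)}.

Definition unpadU (u : UU) : tauhom N L :=
  fun h => unpadm (rdim N (tgt h)) (rdim L (src h)) (u h).
Definition padV (f : forall i, 'M[K]_(rdim N i, rdim L i)) : VV :=
  [ffun i => padm DD (f i)].
Definition Tp (u : UU) : VV := padV (Tf (unpadU u)).

Lemma Tp_lin : linear Tp.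
Proof.
move=> k u w; apply/ffunP => i; rewrite ffun_addE !ffunE.
rewrite (Tf_ext (c2 := fun h => k *: unpadU u h + unpadU w h)); last first.
  move=> h; rewrite /unpadU ffun_addE /unpadm.
  by rewrite mulmxDr mulmxDl -scalemxAr -scalemxAl.
by rewrite Tf_lin /padm mulmxDr mulmxDl -scalemxAr -scalemxAl.
Qed.

HB.instance Definition _ := GRing.isSemilinear.Build K UU VV _ Tp
  (GRing.semilinear_linear Tp_lin).

Definition padU (c : tauhom N L) : UU := [ffun h => padm DD (c h)].

Lemma ffunZE (T : finType) (k : K) (u : {ffun T -> 'M[K]_(DD, DD)}) x :
  (k *: u) x = k *: u x.
Proof. by rewrite ffunE. Qed.

Lemma padm_delta p q (A : 'M[K]_(p, q)) :
  padm DD A = \sum_r \sum_s A r s *: padm DD (delta_mx r s).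
Proof.
rewrite {1}[A]matrix_sum_delta /padm mulmx_sumr mulmx_suml.
apply: eq_bigr => r _; rewrite mulmx_sumr mulmx_suml.
by apply: eq_bigr => s _; rewrite -scalemxAr -scalemxAl.
Qed.

Lemma dual_main (g : forall i, 'M[K]_(rdim N i, rdim L i)) :
  (forall phi : vmaps L N, is_qmor phi -> \sum_i \tr (g i *m phi i) = 0) ->
  exists c : tauhom N L, forall i, Tf c i = g i.
Proof.
move=> Hg.
have [Hin|Hout] := boolP (padV g \in limg (linfun Tp)).
  case/memv_imgP: Hin => u _ E; exists (unpadU u) => i.
  have := congr1 (fun f : VV => f i) E; rewrite lfunE /= /Tp /padV !ffunE => Ei.
  by rewrite -[g i](padK (g i) (leND i) (leLD i)) Ei padK ?leND ?leLD.
exfalso.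
set S := limg (linfun Tp).
pose X := [tuple of padV g :: vbasis S].
have freeX : free X.
  by rewrite /= free_cons (span_basis (vbasisP S)) Hout (basis_free (vbasisP S)).
pose lam := coord X ord0.
have lam_v : lam (padV g) = 1 by rewrite /lam (coord_free ord0 ord0 freeX).
have lam_S : forall u, lam (Tp u) = 0.
  move=> u; have Hu : Tp u \in S by have := memv_img (linfun Tp) (memvf u); rewrite lfunE.
  rewrite (coord_vbasis Hu) /lam linear_sum big1 // => k _; rewrite linearZ /=.
  have -> : (vbasis S)`_k = X`_(lift ord0 k) by [].
  by rewrite coord_free // mulr0.
pose phi : vmaps L N := fun i => \matrix_(s, r)
   lam (padV (fun j => vcast (m := rdim N) (n := rdim L) (a := i) j (delta_mx r s))).
have key : forall f, lam (padV f) = \sum_i \tr (f i *m phi i).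
  move=> f.
  have -> : padV f = \sum_i \sum_r \sum_s f i r s *:
      padV (fun j => vcast (m := rdim N) (n := rdim L) (a := i) j (delta_mx r s)).
    apply/ffunP => j; rewrite sum_ffunE ffunE.
    under eq_bigr => i _ do rewrite sum_ffunE.
    under eq_bigr => i _ do under eq_bigr => r _ do rewrite sum_ffunE.
    under eq_bigr => i _ do under eq_bigr => r _ do under eq_bigr => s _ do
      rewrite ffunZE ffunE.
    rewrite (bigD1 j) //= [X in _ + X]big1 ?addr0.
      by rewrite padm_delta; apply: eq_bigr => r _; apply: eq_bigr => s _; rewrite vcast_id.
    move=> i ne; apply: big1 => r _; apply: big1 => s _.
    by rewrite vcast_neq // /padm mulmx0 mul0mx scaler0.
  rewrite /lam linear_sum; apply: eq_bigr => i _; rewrite linear_sum /mxtrace.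
  apply: eq_bigr => r _; rewrite mxE linear_sum; apply: eq_bigr => s _.
  by rewrite linearZ /= mxE.
have Hphi : is_qmor phi.
  move=> h0; apply/matrixP => r0 s0.
  pose c : tauhom N L := fun h => \matrix_(r, s)
    ((h == h0) && (val r == val s0) && (val s == val r0))%:R.
  have H0 := lam_S (padU c).
  rewrite /Tp key in H0.
  have Ec : forall i, Tf (unpadU (padU c)) i = Tf c i.
    by move=> i; apply: Tf_ext => h; rewrite /unpadU ffunE padK ?leND ?leLD.
  rewrite (eq_bigr (fun i => \tr (Tf c i *m phi i))) in H0; last by move=> i _; rewrite Ec.
  rewrite pair_Tf (bigD1 h0) //= big1 ?addr0 in H0; last first.
    move=> h ne; have -> : c h = 0 by apply/matrixP => r s; rewrite !mxE (negbTE ne).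
    by rewrite mul0mx mxtrace0.
  have Ec0 : c h0 = delta_mx s0 r0.
    by apply/matrixP => r s; rewrite !mxE eqxx /= !val_eqE.
  rewrite Ec0 tr_delta !mxE in H0.
  by apply/eqP; rewrite eq_sym -subr_eq0; apply/eqP; rewrite -H0 !mxE.
have := Hg phi Hphi; rewrite -key lam_v => /eqP; rewrite oner_eq0.
by [].
Qed.

End Dual.

Section Combine.
Variables (K : fieldType) (Q : quiver).
Lemma combine (m n p q p' q' : vert Q -> nat)
  (l : forall v, 'M[K]_(m v, p v)) (r : forall v, 'M[K]_(q v, n v))
  (l' : forall v, 'M[K]_(m v, p' v)) (r' : forall v, 'M[K]_(q' v, n v))
  (U : forall h, 'M[K]_(p (src h), q (src h))) (U' : forall h, 'M[K]_(p' (src h), q' (src h)))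
  (W : forall h, 'M[K]_(p (tgt h), q (tgt h))) (W' : forall h, 'M[K]_(p' (tgt h), q' (tgt h))) i :
  \sum_h vcast (m := m) (n := n) i (l (src h) *m U h *m r (src h) + l' (src h) *m U' h *m r' (src h))
  - \sum_h vcast (m := m) (n := n) i (l (tgt h) *m W h *m r (tgt h) + l' (tgt h) *m W' h *m r' (tgt h))
  = l i *m (\sum_h vcast i (U h) - \sum_h vcast i (W h)) *m r i
    + l' i *m (\sum_h vcast i (U' h) - \sum_h vcast i (W' h)) *m r' i.
Proof.
under eq_bigr => h _ do rewrite vcastD (vcast_famr _ r) (vcast_fam _ l) (vcast_famr _ r') (vcast_fam _ l').
under [X in _ - X]eq_bigr => h _ do rewrite vcastD (vcast_famr _ r) (vcast_fam _ l) (vcast_famr _ r') (vcast_fam _ l').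
rewrite !big_split /= -!mulmx_suml -!mulmx_sumr !mulmxBr !mulmxBl.
by rewrite opprD addrACA.
Qed.

Lemma sum_tr_vcast (m n : vert Q -> nat) (F : arrow Q -> vert Q)
  (P : forall h, 'M[K]_(m (F h), n (F h))) (f : forall v, 'M[K]_(n v, m v)) :
  \sum_i \tr ((\sum_h vcast (m := m) (n := n) i (P h)) *m f i) = \sum_h \tr (P h *m f (F h)).
Proof.
under eq_bigr do rewrite mulmx_suml tr_sum.
rewrite exchange_big /=; apply: eq_bigr => h _; exact: sum_vcast_tr.
Qed.

Lemma pair_gen (m n : vert Q -> nat)
  (P : forall h, 'M[K]_(m (src h), n (src h))) (R : forall h, 'M[K]_(m (tgt h), n (tgt h)))
  (f : forall v, 'M[K]_(n v, m v)) :
  \sum_i \tr ((\sum_h vcast (m := m) (n := n) i (P h) - \sum_h vcast (m := m) (n := n) i (R h)) *m f i)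
  = \sum_h \tr (P h *m f (src h)) - \sum_h \tr (R h *m f (tgt h)).
Proof.
under eq_bigr do rewrite mulmxBl trB.
by rewrite sumrB !sum_tr_vcast.
Qed.
End Combine.

Theorem lemma9p4 (K : closedFieldType) (Q : quiver) (HQ : acyclic Q)
  (x : pimod K Q) (M1 M2 : rep K Q)
  (i1 : vmaps M1 (pM x)) (i2 : vmaps M2 (pM x))
  (p1 : vmaps (pM x) M1) (p2 : vmaps (pM x) M2)
  (Hdec : is_biproduct i1 i2 p1 p2)
  (Htau : tauhom_zero M2 M1)
  (H1 : in_tauhom (tau_comp i1 (ptheta x) p1))
  (H2 : in_tauhom (tau_comp i2 (ptheta x) p2)) :
  let x1 := PiMod H1 in
  let x2 := PiMod H2 in
  [/\ is_extension x1 x2 x,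
      qhom_zero M2 M1 -> rigid x -> rigid x1 /\ rigid x2 &
      qhom_zero M2 M1 -> rigid x -> end_is_field M2 -> ext1_zero x x1].
Proof.
move=> x1 x2.
case: Hdec => qi1 qi2 qp1 qp2 Hv.
have e11 v : i1 v *m p1 v = 1%:M by case: (Hv v).
have e22 v : i2 v *m p2 v = 1%:M by case: (Hv v).
have e12 v : i1 v *m p2 v = 0 by case: (Hv v).
have e21 v : i2 v *m p1 v = 0 by case: (Hv v).
have es v : p1 v *m i1 v + p2 v *m i2 v = 1%:M by case: (Hv v).
set th := ptheta x.
have Z h : i2 (tgt h) *m th h *m p1 (src h) = 0.
  exact: (Htau _ (tau_comp_ok qi2 qp1 (@ptheta_ok _ _ x))).
have Z' h : i2 (tgt h) *m (th h *m p1 (src h)) = 0 by rewrite mulmxA Z.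
have Ti1 h : i1 (tgt h) *m th h = i1 (tgt h) *m th h *m p1 (src h) *m i1 (src h)
     + i1 (tgt h) *m th h *m p2 (src h) *m i2 (src h).
  by rewrite -[LHS]mulmx1 -(es (src h)) mulmxDr !mulmxA.
have Ti2 h : i2 (tgt h) *m th h = i2 (tgt h) *m th h *m p2 (src h) *m i2 (src h).
  by rewrite -[LHS]mulmx1 -(es (src h)) mulmxDr !mulmxA Z mul0mx add0r.
have Tp1 h : th h *m p1 (src h) = p1 (tgt h) *m (i1 (tgt h) *m th h *m p1 (src h)).
  rewrite -[LHS]mul1mx -(es (tgt h)) mulmxDl -!mulmxA Z' mulmx0 addr0.
  by rewrite !mulmxA.
have Tp2 h : th h *m p2 (src h) = p1 (tgt h) *m (i1 (tgt h) *m th h *m p2 (src h))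
    + p2 (tgt h) *m (i2 (tgt h) *m th h *m p2 (src h)).
  by rewrite -[LHS]mul1mx -(es (tgt h)) mulmxDl !mulmxA.
split.
- exists i2, p1; split.
  + by split=> // h; rewrite /= /tau_comp -/th Ti2.
  + by split=> // h; rewrite /= /tau_comp -/th Tp1.
  + move=> v; split.
    * by apply/row_freeP; exists (p2 v).
    * by apply/row_fullP; exists (i1 v).
    * apply/andP; split; first by apply/sub_kermxP.
      exact: (ker_sub_gen (es v)).
- move=> Hq Hrig.
  have Hxx := ext_H1 Hrig.
  have Kill : forall psi : forall v, 'M[K]_(rdim (pM x) v),
      (forall h, i2 (src h) *m (rarr (pM x) h *m psi (tgt h) - psi (src h) *m rarr (pM x) h)
                *m p1 (tgt h) = 0) ->
      forall v, i2 v *m psi v *m p1 v = 0.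
    move=> psi H; apply: Hq => h.
    have := H h; rewrite mulmxBr mulmxBl !mulmxA -qi2 -!mulmxA qp1 !mulmxA.
    by move/eqP; rewrite subr_eq0 => /eqP.
  split.
  + apply: H1_ext => a b Hab.
    pose g : forall i, 'M[K]_(rdim M1 i, rdim M2 i) := fun i =>
      - \sum_h vcast (m := rdim M1) (n := rdim M2) i (a h *m (i1 (tgt h) *m th h *m p2 (src h))).
    have [c Hc] : exists c : tauhom M1 M2, forall i, Tf c i = g i.
      apply: dual_main => phi Hphi; rewrite big1 // => i _.
      by rewrite (Hq _ Hphi i) mulmx0 mxtrace0.
    pose A := fun h => p1 (src h) *m a h *m i1 (tgt h).
    pose B := fun h => p1 (tgt h) *m b h *m i1 (src h) + p1 (tgt h) *m c h *m i2 (src h).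
    have E1 h : A h *m th h + rarr (pM x) h *m B h =
       p1 (src h) *m (a h *m (i1 (tgt h) *m th h *m p1 (src h)) + rarr M1 h *m b h) *m i1 (src h)
     + p1 (src h) *m (a h *m (i1 (tgt h) *m th h *m p2 (src h)) + rarr M1 h *m c h) *m i2 (src h).
      rewrite /A /B -mulmxA {1}Ti1 !mulmxDr !mulmxDl !mulmxA qp1.
      by rewrite addrACA.
    have E2 h : B h *m rarr (pM x) h + th h *m A h =
       p1 (tgt h) *m (b h *m rarr M1 h + (i1 (tgt h) *m th h *m p1 (src h)) *m a h) *m i1 (tgt h)
     + p1 (tgt h) *m (c h *m rarr M2 h) *m i2 (tgt h).
      rewrite /A /B mulmxDl -!mulmxA -qi1 -qi2 !mulmxA Tp1 !mulmxDr !mulmxDl !mulmxA.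
      by rewrite addrAC.
    have HA : @coc _ _ x x A B.
      move=> i; under eq_bigr => h _ do rewrite E1.
      under [X in _ - X]eq_bigr => h _ do rewrite E2.
      rewrite combine.
      move: (Hab i); rewrite /= /tau_comp -/th => ->.
      under eq_bigr => h _ do rewrite vcastD.
      rewrite big_split /= -addrA.
      have Hci := Hc i; rewrite /Tf in Hci; rewrite Hci /g.
      by rewrite addrN !mulmx0 !mul0mx addr0.
    have [psi Hpsi] := Hxx A B HA.
    have Z21 : forall v, i2 v *m psi v *m p1 v = 0.
      apply: Kill => h; rewrite -(proj1 (Hpsi h)) /A.
      by rewrite !mulmxA e21 !mul0mx.
    have Z21' v : i2 v *m (psi v *m p1 v) = 0 by rewrite mulmxA Z21.
    exists (fun v => i1 v *m psi v *m p1 v) => h; split.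
    * have Ea := proj1 (Hpsi h).
      have <- : i1 (src h) *m A h *m p1 (tgt h) = a h.
        by rewrite /A !mulmxA e11 mul1mx -mulmxA e11 mulmx1.
      rewrite Ea mulmxBr mulmxBl !mulmxA -qi1 -!mulmxA qp1 !mulmxA.
      by [].
    * have Eb := proj2 (Hpsi h).
      have <- : i1 (tgt h) *m B h *m p1 (src h) = b h.
        rewrite /B mulmxDr mulmxDl !mulmxA e11 !mul1mx -!mulmxA e11 e21 mulmx1 mulmx0.
        by rewrite addr0.
      rewrite Eb mulmxBr mulmxBl /= /tau_comp -/th.
      congr (_ - _).
        have Ei : i1 (tgt h) *m th h = i1 (tgt h) *m th h *m
            (p1 (src h) *m i1 (src h) + p2 (src h) *m i2 (src h)) by rewrite es mulmx1.
        rewrite !mulmxA {1}Ei mulmxDr !mulmxDl -!mulmxA Z21' !mulmx0 addr0.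
        by rewrite !mulmxA.
      by rewrite -!mulmxA {1}Tp1 !mulmxA.
  + apply: H1_ext => a b Hab.
    pose g : forall i, 'M[K]_(rdim M1 i, rdim M2 i) := fun i =>
      \sum_h vcast (m := rdim M1) (n := rdim M2) i ((i1 (tgt h) *m th h *m p2 (src h)) *m a h).
    have [c Hc] : exists c : tauhom M1 M2, forall i, Tf c i = g i.
      apply: dual_main => phi Hphi; rewrite big1 // => i _.
      by rewrite (Hq _ Hphi i) mulmx0 mxtrace0.
    pose A := fun h => p2 (src h) *m a h *m i2 (tgt h).
    pose B := fun h => p2 (tgt h) *m b h *m i2 (src h) + p1 (tgt h) *m c h *m i2 (src h).
    have E1 h : A h *m th h + rarr (pM x) h *m B h =
       p2 (src h) *m (a h *m (i2 (tgt h) *m th h *m p2 (src h)) + rarr M2 h *m b h) *m i2 (src h)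
     + p1 (src h) *m (rarr M1 h *m c h) *m i2 (src h).
      rewrite /A /B -mulmxA {1}Ti2 !mulmxDr !mulmxDl !mulmxA qp1 qp2.
      by rewrite addrA.
    have E2 h : B h *m rarr (pM x) h + th h *m A h =
       p2 (tgt h) *m (b h *m rarr M2 h + (i2 (tgt h) *m th h *m p2 (src h)) *m a h) *m i2 (tgt h)
     + p1 (tgt h) *m (c h *m rarr M2 h + (i1 (tgt h) *m th h *m p2 (src h)) *m a h) *m i2 (tgt h).
      rewrite /A /B mulmxDl -!mulmxA -qi2 !mulmxA Tp2 !mulmxDr !mulmxDl !mulmxA.
      by rewrite [X in _ + X = _]addrC addrACA.
    have HA : @coc _ _ x x A B.
      move=> i; under eq_bigr => h _ do rewrite E1.
      under [X in _ - X]eq_bigr => h _ do rewrite E2.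
      rewrite combine.
      move: (Hab i); rewrite /= /tau_comp -/th => ->.
      under [X in _ - X]eq_bigr => h _ do rewrite vcastD.
      rewrite big_split /= opprD addrA.
      have Hci := Hc i; rewrite /Tf in Hci; rewrite Hci /g.
      by rewrite subrr !mulmx0 !mul0mx addr0.
    have [psi Hpsi] := Hxx A B HA.
    have Z21 : forall v, i2 v *m psi v *m p1 v = 0.
      apply: Kill => h; rewrite -(proj1 (Hpsi h)) /A.
      by rewrite !mulmxA e22 mul1mx -mulmxA e21 mulmx0.
    exists (fun v => i2 v *m psi v *m p2 v) => h; split.
    * have Ea := proj1 (Hpsi h).
      have <- : i2 (src h) *m A h *m p2 (tgt h) = a h.
        by rewrite /A !mulmxA e22 mul1mx -mulmxA e22 mulmx1.
      rewrite Ea mulmxBr mulmxBl !mulmxA -qi2 -!mulmxA qp2 !mulmxA.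
      by [].
    * have Eb := proj2 (Hpsi h).
      have <- : i2 (tgt h) *m B h *m p2 (src h) = b h.
        rewrite /B mulmxDr mulmxDl !mulmxA e22 e21 mul1mx mul0mx !mul0mx addr0.
        by rewrite -mulmxA e22 mulmx1.
      rewrite Eb mulmxBr mulmxBl /= /tau_comp -/th.
      congr (_ - _).
        by rewrite !mulmxA {1}Ti2.
      by rewrite -!mulmxA {1}Tp2 !mulmxDr !mulmxA Z21 !mul0mx add0r.
- move=> Hq Hrig [_ Hend].
  have Hxx := ext_H1 Hrig.
  apply: H1_ext => a b Hab.
  pose g : forall i, 'M[K]_(rdim (pM x) i, rdim M2 i) := fun i =>
    - \sum_h vcast (m := rdim (pM x)) (n := rdim M2) i (a h *m (i1 (tgt h) *m th h *m p2 (src h))).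
  have Tr0 : \sum_h \tr (a h *m (i1 (tgt h) *m th h *m p2 (src h)) *m i2 (src h)) = 0.
    have := pair_gen (fun h => a h *m (i1 (tgt h) *m th h *m p1 (src h)) + rarr (pM x) h *m b h)
        (fun h => b h *m rarr M1 h + th h *m a h) i1.
    rewrite (eq_bigr (fun i => 0)); last first.
      by move=> i _; rewrite (Hab i) mul0mx mxtrace0.
    rewrite big1 // -sumrB => H0.
    suff : \sum_h - \tr (a h *m (i1 (tgt h) *m th h *m p2 (src h)) *m i2 (src h)) = 0.
      by rewrite sumrN => /eqP; rewrite oppr_eq0 => /eqP.
    rewrite [RHS]H0; apply: eq_bigr => h _.
    have t1 : \tr (b h *m rarr M1 h *m i1 (tgt h)) = \tr (rarr (pM x) h *m b h *m i1 (src h)).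
      by rewrite -mulmxA qi1 mulmxA mxtrace_mulC mulmxA.
    have t2 : \tr (th h *m a h *m i1 (tgt h)) =
        \tr (a h *m (i1 (tgt h) *m th h *m p1 (src h)) *m i1 (src h))
      + \tr (a h *m (i1 (tgt h) *m th h *m p2 (src h)) *m i2 (src h)).
      rewrite -[th h *m a h *m i1 (tgt h)]mulmxA [LHS]mxtrace_mulC -[a h *m i1 (tgt h) *m th h]mulmxA {1}Ti1 mulmxDr mxtraceD.
      by rewrite !mulmxA.
    rewrite !mulmxDl !mxtraceD t1 t2.
    ring.
  have [c Hc] : exists c : tauhom (pM x) M2, forall i, Tf c i = g i.
    apply: dual_main => phi Hphi.
    have q1 : is_qmor (fun v => phi v *m p1 v).
      by move=> h; rewrite /= mulmxA Hphi -mulmxA qp1 mulmxA.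
    have q2 : is_qmor (fun v => phi v *m p2 v).
      by move=> h; rewrite /= mulmxA Hphi -mulmxA qp2 mulmxA.
    have [al Hal] := Hend _ q2.
    have Ephi v : phi v = al *: i2 v.
      rewrite -[phi v]mulmx1 -(es v) mulmxDr !mulmxA (Hq _ q1 v) mul0mx add0r.
      by move: (Hal v) => /= ->; rewrite mul_scalar_mx.
    under eq_bigr do rewrite Ephi -scalemxAr mxtraceZ.
    rewrite -mulr_sumr /g.
    under eq_bigr do rewrite mulNmx raddfN.
    by rewrite sumrN sum_tr_vcast Tr0 oppr0 mulr0.
  pose A := fun h => a h *m i1 (tgt h).
  pose B := fun h => b h *m i1 (src h) + c h *m i2 (src h).
  have E1 h : A h *m th h + rarr (pM x) h *m B h =
     (fun v => 1%:M) (src h) *m (a h *m (i1 (tgt h) *m th h *m p1 (src h)) + rarr (pM x) h *m b h) *m i1 (src h)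
   + (fun v => 1%:M) (src h) *m (a h *m (i1 (tgt h) *m th h *m p2 (src h)) + rarr (pM x) h *m c h) *m i2 (src h).
    rewrite /= !mul1mx /A /B -mulmxA {1}Ti1 !mulmxDr !mulmxDl !mulmxA.
    by rewrite addrACA.
  have E2 h : B h *m rarr (pM x) h + th h *m A h =
     (fun v => 1%:M) (tgt h) *m (b h *m rarr M1 h + th h *m a h) *m i1 (tgt h)
   + (fun v => 1%:M) (tgt h) *m (c h *m rarr M2 h) *m i2 (tgt h).
    rewrite /= !mul1mx /A /B mulmxDl -!mulmxA -qi1 -qi2 !mulmxDl !mulmxA.
    by rewrite addrAC.
  have HA : @coc _ _ x x A B.
    move=> i; under eq_bigr => h _ do rewrite E1.
    under [X in _ - X]eq_bigr => h _ do rewrite E2.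
    rewrite (combine (fun v => 1%:M : 'M[K]_(rdim (pM x) v)) i1 (fun v => 1%:M : 'M[K]_(rdim (pM x) v)) i2).
    rewrite !mul1mx.
    move: (Hab i); rewrite /= /tau_comp -/th => ->.
    under eq_bigr => h _ do rewrite vcastD.
    rewrite big_split /= -addrA.
    have Hci := Hc i; rewrite /Tf in Hci; rewrite Hci /g.
    by rewrite addrN !mul0mx addr0.
  have [psi Hpsi] := Hxx A B HA.
  exists (fun v => psi v *m p1 v) => h; split.
  + have Ea := proj1 (Hpsi h).
    have <- : A h *m p1 (tgt h) = a h by rewrite /A -mulmxA e11 mulmx1.
    by rewrite Ea mulmxBl -!mulmxA qp1 !mulmxA.
  + have Eb := proj2 (Hpsi h).
    have <- : B h *m p1 (src h) = b h.
      by rewrite /B mulmxDl -!mulmxA e11 e21 mulmx1 mulmx0 addr0.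
    rewrite Eb mulmxBl /= /tau_comp -/th.
    congr (_ - _); first by rewrite mulmxA.
    by rewrite -[LHS]mulmxA Tp1 [LHS]mulmxA.
Qed.
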